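(* Let $n\ge 1$, let $Q$ be an $n$-state 1gQFA over a finite alphabet $\Sigma$, and let $\lambda\in[0,1)$. Then there exist a one-way PFA $P$ over $\Sigma$ with at most $2n^2+6$ states and a strict cutpoint $\mu\in[0,1)$ such that $L(P,\mu)=L(Q,\lambda)$. In particular, the cost of strict-cutpoint simulation of $n$-state 1gQFA by PFA is $O(n^2)$ states.
   Context: Let $\Sigma$ be a finite alphabet and $\Sigma^\ast$ the set of finite words over it. Probabilistic computations are written with row vectors; stochastic matrices act on the right. A one-way PFA (probabilistic finite automaton, end-marker model) over $\Sigma$ is a tuple $P=(S,\Sigma,\pi,\{P_\sigma\}_{\sigma\in\Sigma},P_{\#},F)$, where $S$ is a finite state set (its number of states is $|S|$), $\pi$ is an initial probability distribution (row vector) on $S$, each $P_\sigma$ and $P_\#$ are row-stochastic $|S|\times|S|$ matrices, and $F\subseteq S$. For $w=\sigma_1\cdots\sigma_m$, $f_P(w)=\pi P_{\sigma_1}\cdots P_{\sigma_m}P_\#\mathbf 1_F$, where $\mathbf 1_F$ is the indicator column vector of $F$. For $\mu\in[0,1)$, $L(P,\mu)=\{w\in\Sigma^\ast: f_P(w)>\mu\}$. An $n$-state 1gQFA (measure-once one-way general quantum finite automaton) over $\Sigma$ is a tuple $Q=(\mathcal H,\Sigma,\rho_0,\{\mathcal E_\sigma\}_{\sigma\in\Sigma},P_{\mathrm{acc}})$ where $\mathcal H\cong\mathbb C^n$, $\rho_0$ is a density operator on $\mathcal H$, each $\mathcal E_\sigma$ is a completely positive trace-preserving map on the operators on $\mathcal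 H$, and $P_{\mathrm{acc}}$ is an orthogonal projector on $\mathcal H$. For $w=\sigma_1\cdots\sigma_m$, $\rho_w=\mathcal E_{\sigma_m}\circ\cdots\circ\mathcal E_{\sigma_1}(\rho_0)$ and $f_Q(w)=\operatorname{Tr}(P_{\mathrm{acc}}\rho_w)$. For $\lambda\in[0,1)$, $L(Q,\lambda)=\{w\in\Sigma^\ast: f_Q(w)>\lambda\}$. *)

(* Defs.v *)
From HB Require Import structures.
From mathcomp Require Import all_boot all_order all_algebra.
From mathcomp Require Import complex reals.
Set Implicit Arguments. Unset Strict Implicit. Unset Printing Implicit Defensive.
Import Order.TTheory GRing.Theory Num.Theory.
Local Open Scope ring_scope.

Section Defs.
Variable R : realType.
Local Notation C := R[i].

Definition psdf (I : finType) (A : I -> I -> C) : Prop :=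
  (forall i j, A j i = (A i j)^*) /\
  (forall v : I -> C, 0 <= \sum_i \sum_j (v i)^* * A i j * v j).

Definition psdmx (n : nat) (A : 'M[C]_n) : Prop := psdf (fun i j => A i j).

Definition adjmx (n : nat) (A : 'M[C]_n) : 'M[C]_n := \matrix_(i, j) (A j i)^*.

Definition density (n : nat) (rho : 'M[C]_n) : Prop := psdmx rho /\ \tr rho = 1.

Definition orth_proj (n : nat) (P : 'M[C]_n) : Prop := P *m P = P /\ adjmx P = P.

Definition linear_map (n : nat) (E : 'M[C]_n -> 'M[C]_n) : Prop :=
  forall (a : C) (X Y : 'M[C]_n), E (a *: X + Y) = a *: E X + E Y.

(* complete positivity: for every k, id_k (x) E maps PSD block matrices
   (k x k blocks of n x n matrices, indexed by 'I_k * 'I_n) to PSD ones. *)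
Definition completely_positive (n : nat) (E : 'M[C]_n -> 'M[C]_n) : Prop :=
  forall (k : nat) (X : 'I_k -> 'I_k -> 'M[C]_n),
    psdf (fun p q : 'I_k * 'I_n => X p.1 q.1 p.2 q.2) ->
    psdf (fun p q : 'I_k * 'I_n => E (X p.1 q.1) p.2 q.2).

Definition trace_preserving (n : nat) (E : 'M[C]_n -> 'M[C]_n) : Prop :=
  forall X : 'M[C]_n, \tr (E X) = \tr X.

Definition CPTP (n : nat) (E : 'M[C]_n -> 'M[C]_n) : Prop :=
  [/\ linear_map E, completely_positive E & trace_preserving E].

Record gqfa (Sigma : finType) (n : nat) := GQFA {
  q_rho0 : 'M[C]_n;
  q_E : Sigma -> 'M[C]_n -> 'M[C]_n;
  q_Pacc : 'M[C]_n;
  q_rho0_density : density q_rho0;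
  q_E_cptp : forall s, CPTP (q_E s);
  q_Pacc_proj : orth_proj q_Pacc
}.

Definition gqfa_state (Sigma : finType) (n : nat) (Q : gqfa Sigma n)
  (w : seq Sigma) : 'M[C]_n := foldl (fun rho s => q_E Q s rho) (q_rho0 Q) w.

Definition f_Q (Sigma : finType) (n : nat) (Q : gqfa Sigma n) (w : seq Sigma) : C :=
  \tr (q_Pacc Q *m gqfa_state Q w).

Definition distribution (m : nat) (pi : 'rV[R]_m) : Prop :=
  (forall i, 0 <= pi 0 i) /\ \sum_i pi 0 i = 1.

Definition row_stochastic (m : nat) (M : 'M[R]_m) : Prop :=
  (forall i j, 0 <= M i j) /\ (forall i, \sum_j M i j = 1).

Record pfa (Sigma : finType) (m : nat) := PFA {
  p_pi : 'rV[R]_m;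
  p_P : Sigma -> 'M[R]_m;
  p_end : 'M[R]_m;
  p_F : {set 'I_m};
  p_pi_distr : distribution p_pi;
  p_P_stoch : forall s, row_stochastic (p_P s);
  p_end_stoch : row_stochastic p_end
}.

Definition f_P (Sigma : finType) (m : nat) (P : pfa Sigma m) (w : seq Sigma) : R :=
  (foldl (fun v s => v *m p_P P s) (p_pi P) w *m p_end P
     *m \col_i (i \in p_F P)%:R) 0 0.

End Defs.

Definition lang_P (R : realType) (Sigma : finType) (m : nat) (P : pfa R Sigma m) (mu : R)
  : seq Sigma -> Prop := fun w => mu < f_P P w.

Definition lang_Q (R : realType) (Sigma : finType) (n : nat) (Q : gqfa R Sigma n) (lam : R)
  : seq Sigma -> Prop := fun w => (lam%:C)%C < f_Q Q w.

(* Main.v *)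
Require Import Defs.
From HB Require Import structures.
From mathcomp Require Import all_boot all_order all_algebra.
From mathcomp Require Import complex reals.
From mathcomp Require Import ring lra zify.
Import Order.TTheory GRing.Theory Num.Theory.
Local Open Scope ring_scope.

Lemma big_opt (R : realType) (T : finType) (F : option T -> R) :
  \sum_x F x = F None + \sum_y F (Some y).
Proof.
rewrite (bigD1 None) //=; congr (_ + _).
rewrite (reindex_omap Some id); last by case.
by apply: eq_bigl => j; rewrite /= eqxx.
Qed.

Section Tur.
Variables (R : realType) (Sigma : finType) (T : finType).
Variables (A : Sigma -> T -> T -> R) (a b : T -> R).

Definition stepT (u : T -> R) s := fun y => \sum_x u x * A s x y.
Definition gval w := \sum_x (foldl stepT a w) x * b x.

Local Notation T2 := (option (option T)).

Definition Bm s (x y : T2) : R := match x, y with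
 | None, Some None => \sum_i \sum_j A s i j
 | None, Some (Some j) => - \sum_i A s i j
 | Some (Some i), Some (Some j) => A s i j
 | Some (Some i), Some None => - \sum_j A s i j
 | _, _ => 0 end.

Lemma Bm_row s x : \sum_y Bm s x y = 0.
Proof.
rewrite big_opt big_opt /=; case: x => [[i|]|] /=.
- by rewrite add0r addNr.
- by rewrite !add0r big1.
- by rewrite add0r sumrN exchange_big addrN.
Qed.

Lemma Bm_col s y : \sum_x Bm s x y = 0.
Proof.
rewrite big_opt big_opt /=; case: y => [[j|]|] /=.
- by rewrite add0r addNr.
- by rewrite add0r sumrN addrN.
- by rewrite !add0r big1 // => -[].
Qed.

Definition pt (x : T2) : R := match x with
  None => 0 | Some None => - \sum_i a i | Some (Some i) => a i end.
Definition et (x : T2) : R := match x with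
  None => - \sum_i b i | Some None => 0 | Some (Some i) => b i end.

Definition stepB (u : T2 -> R) s := fun y => \sum_x u x * Bm s x y.
Definition ut w := foldl stepB pt w.

Lemma ut_prop w : [/\ ut w None = 0, \sum_x ut w x = 0 &
   forall j, ut w (Some (Some j)) = foldl stepT a w j].
Proof.
elim/last_ind: w => [|w s [IH1 IH2 IH3]].
  split => //; by rewrite /ut /= big_opt big_opt /= add0r addNr.
rewrite /ut !foldl_rcons /stepB -/(ut w); split.
- by rewrite big1 // => -[[i|]|]; rewrite /= ?mulr0 ?IH1 ?mul0r.
- rewrite exchange_big /= big1 // => x _; by rewrite -mulr_sumr Bm_row mulr0.
- move=> j; rewrite big_opt big_opt IH1 mul0r add0r /= mulr0 add0r /stepT.
  by apply: eq_bigr => i _; rewrite IH3.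
Qed.

Lemma ut_et w : \sum_x ut w x * et x = gval w.
Proof.
have [h1 _ h3] := ut_prop w.
rewrite big_opt big_opt h1 mul0r add0r /= mulr0 add0r.
by apply: eq_bigr => i _; rewrite h3.
Qed.


Lemma le_sum1 (I : finType) (F : I -> R) i : (forall j, 0 <= F j) -> F i <= \sum_j F j.
Proof. by move=> h; rewrite (bigD1 i) //= lerDl sumr_ge0. Qed.

Definition NN : R := #|{: T2}|%:R.
Lemma NN_gt0 : 0 < NN.
Proof. by rewrite /NN ltr0n card_option. Qed.
Lemma sum_const_T2 (c : R) : \sum_(x : T2) c = NN * c.
Proof. by rewrite sumr_const -mulr_natl. Qed.

Definition cB := 1 + \sum_s \sum_x \sum_y `|Bm s x y|.
Lemma cB_gt0 : 0 < cB.
Proof.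
have h : 0 <= \sum_s \sum_x \sum_y `|Bm s x y| by do 3 (apply: sumr_ge0 => ? _).
rewrite /cB; lra.
Qed.
Lemma Bm_le s x y : `|Bm s x y| <= cB.
Proof.
have h1 := le_sum1 _ (fun s => \sum_x \sum_y `|Bm s x y|) s (fun j => sumr_ge0 _ (fun _ _ => sumr_ge0 _ (fun _ _ => normr_ge0 _))).
have h2 := le_sum1 _ (fun x => \sum_y `|Bm s x y|) x (fun j => sumr_ge0 _ (fun _ _ => normr_ge0 _)).
have h3 := le_sum1 _ (fun y => `|Bm s x y|) y (fun j => normr_ge0 _).
rewrite /cB /=; simpl in h1, h2, h3; lra.
Qed.

Definition PP s (x y : T2) := Bm s x y / (cB * NN) + NN^-1.
Definition tt := 1 + \sum_x `|pt x|.
Definition ppi x := pt x / (tt * NN) + NN^-1.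
Definition s0 := 1 + \sum_x `|et x|.
Definition eta x := et x / (2 * s0) + 2^-1.
Definition PE (x y : T2) : R :=
  match y with None => eta x | Some None => 1 - eta x | _ => 0 end.
Definition stepP (v : T2 -> R) s := fun y => \sum_x v x * PP s x y.
Definition vt w := foldl stepP ppi w.

Lemma vt_eq w x : vt w x = ((cB * NN)^-1) ^+ (size w) / (tt * NN) * ut w x + NN^-1.
Proof.
elim/last_ind: w x => [|w s IH] x.
  by rewrite /vt /ut /= expr0 mul1r /ppi mulrC.
have [_ hs _] := ut_prop w.
rewrite /vt /ut !foldl_rcons -/(vt w) -/(ut w) /stepP /stepB size_rcons.
set al := (cB * NN)^-1 ^+ size w / (tt * NN).
have -> : \sum_x0 vt w x0 * PP s x0 x = \sum_x0 ((al * (cB * NN)^-1) * (ut w x0 * Bm s x0 x)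
   + (al * NN^-1) * ut w x0 + (NN^-1 * (cB * NN)^-1) * Bm s x0 x + NN^-1 * NN^-1).
  apply: eq_bigr => y _; rewrite IH /PP -/al; ring.
rewrite !big_split /= -!mulr_sumr hs Bm_col sum_const_T2 !mulr0 !addr0.
rewrite divff ?mulr1; last by rewrite gt_eqF // NN_gt0.
by rewrite /al exprS; ring.
Qed.

Definition fval w := \sum_x vt w x * eta x.

Lemma fval_eq w : fval w = ((cB * NN)^-1) ^+ (size w) / (tt * NN) / (2 * s0) * gval w + 2^-1.
Proof.
have [_ hs _] := ut_prop w.
set al := (cB * NN)^-1 ^+ size w / (tt * NN).
have -> : fval w = \sum_x (al / (2 * s0) * (ut w x * et x) + al / 2 * ut w x
    + (NN^-1 / (2 * s0)) * et x + NN^-1 / 2).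
  apply: eq_bigr => y _; rewrite vt_eq /eta -/al; ring.
have ets : \sum_x et x = 0.
  by rewrite big_opt big_opt /= add0r addNr.
rewrite !big_split /= -!mulr_sumr hs ets sum_const_T2 !mulr0 !addr0 ut_et.
by rewrite mulrA mulVf ?mul1r // gt_eqF // NN_gt0.
Qed.


Lemma norm_le_1sum (I : finType) (f : I -> R) x : `|f x| <= 1 + \sum_y `|f y|.
Proof. have := le_sum1 _ (fun y => `|f y|) x (fun _ => normr_ge0 _); simpl; lra. Qed.

Lemma sumabs_ge0 (I : finType) (f : I -> R) : 0 < 1 + \sum_y `|f y|.
Proof. have : 0 <= \sum_y `|f y| by apply: sumr_ge0 => ? _. lra. Qed.

Lemma PP_ge0 s x y : 0 <= PP s x y.
Proof.
have hc := cB_gt0; have hn := NN_gt0.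
have -> : PP s x y = (Bm s x y + cB) / (cB * NN).
  rewrite /PP; field; apply/andP; split; exact: lt0r_neq0.
apply: divr_ge0; last by rewrite mulr_ge0 // ltW.
have := Bm_le s x y; rewrite ler_norml => /andP[h _]; lra.
Qed.

Lemma PP_row s x : \sum_y PP s x y = 1.
Proof.
rewrite big_split /= -mulr_suml Bm_row mul0r add0r sum_const_T2 divff //.
exact: lt0r_neq0 NN_gt0.
Qed.

Lemma ppi_ge0 x : 0 <= ppi x.
Proof.
have hc : 0 < tt by exact: (sumabs_ge0 _ _).
have hn := NN_gt0.
have -> : ppi x = (pt x + tt) / (tt * NN).
  rewrite /ppi; field; apply/andP; split; exact: lt0r_neq0.
apply: divr_ge0; last by rewrite mulr_ge0 // ltW.
have := norm_le_1sum _ pt x; rewrite -/tt ler_norml => /andP[h _]; lra.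
Qed.

Lemma ppi_sum : \sum_x ppi x = 1.
Proof.
have hp : \sum_x pt x = 0 by rewrite big_opt big_opt /= add0r addNr.
rewrite big_split /= -mulr_suml hp mul0r add0r sum_const_T2 divff //.
exact: lt0r_neq0 NN_gt0.
Qed.

Lemma eta_01 x : 0 <= eta x <= 1.
Proof.
have hc : 0 < s0 by exact: (sumabs_ge0 _ _).
have -> : eta x = (et x + s0) / (2 * s0).
  rewrite /eta; field; exact: lt0r_neq0.
have := norm_le_1sum _ et x; rewrite -/s0 ler_norml => /andP[h1 h2].
apply/andP; split.
  by apply: divr_ge0; [lra | rewrite mulr_ge0 // ltW].
rewrite ler_pdivrMr; last by rewrite mulr_gt0.
lra.
Qed.

Lemma PE_ge0 x y : 0 <= PE x y.
Proof.
have /andP[h1 h2] := eta_01 x.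
case: y => [[y|]|] //=; lra.
Qed.

Lemma PE_row x : \sum_y PE x y = 1.
Proof. by rewrite big_opt big_opt big1 //= addr0 addrC subrK. Qed.

Definition m2 := #|{: T2}|.
Definition ev : 'I_m2 -> T2 := enum_val.
Lemma sum_ev (F : T2 -> R) : \sum_(i < m2) F (ev i) = \sum_x F x.
Proof. by rewrite /ev -big_enum_val. Qed.

Lemma PPm_stoch s : row_stochastic (\matrix_(i, j) PP s (ev i) (ev j) : 'M[R]_m2).
Proof.
split=> [i j|i]; first by rewrite mxE PP_ge0.
by rewrite (eq_bigr (fun j => PP s (ev i) (ev j))) ?sum_ev ?PP_row // => j _; rewrite mxE.
Qed.

Lemma PEm_stoch : row_stochastic (\matrix_(i, j) PE (ev i) (ev j) : 'M[R]_m2).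
Proof.
split=> [i j|i]; first by rewrite mxE PE_ge0.
by rewrite (eq_bigr (fun j => PE (ev i) (ev j))) ?sum_ev ?PE_row // => j _; rewrite mxE.
Qed.

Lemma ppim_distr : distribution (\row_i ppi (ev i) : 'rV[R]_m2).
Proof.
split=> [i|]; first by rewrite mxE ppi_ge0.
by rewrite (eq_bigr (fun j => ppi (ev j))) ?sum_ev ?ppi_sum // => j _; rewrite mxE.
Qed.

Definition thePFA : pfa R Sigma m2 :=
  @PFA R Sigma m2 (\row_i ppi (ev i)) (fun s => \matrix_(i, j) PP s (ev i) (ev j))
    (\matrix_(i, j) PE (ev i) (ev j)) [set i | ev i == None]
    ppim_distr PPm_stoch PEm_stoch.

Lemma thePFA_f w : f_P thePFA w = fval w.
Proof.
have hv : foldl (fun v s => v *m p_P thePFA s) (p_pi thePFA) w = \row_i vt w (ev i).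
  elim/last_ind: w => [|w s IH]; first by [].
  rewrite !foldl_rcons IH /vt foldl_rcons -/(vt w); apply/rowP => j.
  rewrite !mxE /stepP -sum_ev; apply: eq_bigr => i _; by rewrite !mxE.
rewrite /f_P hv mxE.
rewrite (eq_bigr (fun j => (\sum_x vt w x * PE x (ev j)) * (ev j == None)%:R)); last first.
  move=> j _; rewrite !mxE inE; congr (_ * _).
  by rewrite -sum_ev; apply: eq_bigr => i _; rewrite !mxE.
rewrite (sum_ev (fun y => (\sum_x vt w x * PE x y) * (y == None)%:R)).
rewrite big_opt [X in _ + X]big1 ?addr0 /= ?mulr1 // => y _; by rewrite mulr0.
Qed.

End Tur.
Section Qu.
Variables (R : realType) (Sigma : finType) (n : nat) (Q : gqfa R Sigma n).
Local Notation C := R[i].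

Lemma ReD (x y : C) : complex.Re (x + y) = complex.Re x + complex.Re y. Proof. by case: x; case: y. Qed.
Lemma ImD (x y : C) : complex.Im (x + y) = complex.Im x + complex.Im y. Proof. by case: x; case: y. Qed.
Lemma ReM (x y : C) : complex.Re (x * y) = complex.Re x * complex.Re y - complex.Im x * complex.Im y. Proof. by case: x; case: y. Qed.
Lemma ImM (x y : C) : complex.Im (x * y) = complex.Re x * complex.Im y + complex.Im x * complex.Re y. Proof. by case: x; case: y. Qed.
Lemma Re_sum (I : finType) (F : I -> C) : complex.Re (\sum_i F i) = \sum_i complex.Re (F i).
Proof. exact: (big_morph _ ReD (erefl _)). Qed.
Lemma Im_sum (I : finType) (F : I -> C) : complex.Im (\sum_i F i) = \sum_i complex.Im (F i).
Proof. exact: (big_morph _ ImD (erefl _)). Qed.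

Section Lin.
Variable s : Sigma.
Local Notation E := (q_E Q s).
Lemma hlin : linear_map E. Proof. by case: (q_E_cptp Q s). Qed.
Lemma E0 : E 0 = 0.
Proof.
have := hlin 1 0 0; rewrite scaler0 add0r scale1r => h.
have := congr1 (fun M => M - E 0) h; rewrite /= subrr addrK => h2.
by rewrite -h2.
Qed.
Lemma ED X Y : E (X + Y) = E X + E Y.
Proof. by have := hlin 1 X Y; rewrite !scale1r. Qed.
Lemma EZ a X : E (a *: X) = a *: E X.
Proof. by have := hlin a X 0; rewrite !addr0 E0 addr0. Qed.
Lemma Esum (F : 'I_n -> 'M[C]_n) : E (\sum_i F i) = \sum_i E (F i).
Proof.
apply: (big_rec2 (fun y1 y2 => E y1 = y2)); first exact: E0.
by move=> i y1 y2 _ <-; rewrite ED.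
Qed.
Lemma E_entry X k l : E X k l = \sum_i \sum_j X i j * E (delta_mx i j) k l.
Proof.
rewrite {1}(matrix_sum_delta X) Esum summxE; apply: eq_bigr => i _.
rewrite Esum summxE; apply: eq_bigr => j _.
by rewrite EZ mxE.
Qed.
End Lin.

Definition TT := ('I_n * 'I_n * bool)%type.

Lemma sumT (F : TT -> R) :
  \sum_p F p = \sum_i \sum_j (F ((i, j), true) + F ((i, j), false)).
Proof.
transitivity (\sum_(ij : 'I_n * 'I_n) \sum_(b : bool) F (ij, b)).
  by rewrite pair_bigA; apply: eq_bigr => -[ij b] _.
rewrite [in RHS]pair_bigA; apply: eq_bigr => -[i j] _.
by rewrite big_bool.
Qed.

Definition coord (X : 'M[C]_n) (p : TT) : R :=
  if p.2 then complex.Im (X p.1.1 p.1.2) else complex.Re (X p.1.1 p.1.2).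

Definition Amat s (p q : TT) : R :=
  let z := q_E Q s (delta_mx p.1.1 p.1.2) q.1.1 q.1.2 in
  match p.2, q.2 with
  | false, false => complex.Re z | true, false => - complex.Im z
  | false, true => complex.Im z | true, true => complex.Re z end.

Lemma coordE s X q : coord (q_E Q s X) q = \sum_p coord X p * Amat s p q.
Proof.
rewrite sumT; case: q => [[k l] b]; rewrite /coord /= E_entry.
case: b => /=.
- rewrite Im_sum; apply: eq_bigr => i _; rewrite Im_sum; apply: eq_bigr => j _.
  rewrite /Amat /= ImM; ring.
- rewrite Re_sum; apply: eq_bigr => i _; rewrite Re_sum; apply: eq_bigr => j _.
  rewrite /Amat /= ReM; ring.
Qed.

Definition bco (p : TT) : R :=
  let z := q_Pacc Q p.1.2 p.1.1 in if p.2 then - complex.Im z else complex.Re z.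

Lemma Re_fQ w : complex.Re (f_Q Q w) = \sum_p coord (gqfa_state Q w) p * bco p.
Proof.
rewrite sumT /f_Q /mxtrace Re_sum exchange_big /=; apply: eq_bigr => l _.
rewrite mxE Re_sum; apply: eq_bigr => k _.
rewrite /coord /bco /= ReM; ring.
Qed.


Lemma sum1n (G : 'I_1 * 'I_n -> C) : \sum_p G p = \sum_i G (ord0, i).
Proof.
transitivity (\sum_(a < 1) \sum_i G (a, i)); last by rewrite big_ord1.
by rewrite pair_bigA; apply: eq_bigr => -[a i].
Qed.

Lemma psd_lift (M : 'M[C]_n) : psdf (fun i j => M i j) ->
  psdf (fun p q : 'I_1 * 'I_n => M p.2 q.2).
Proof.
move=> [h1 h2]; split => [p q|v]; first exact: h1.
rewrite sum1n; under eq_bigr do rewrite sum1n.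
exact: (h2 (fun i => v (ord0, i))).
Qed.

Lemma psd_lower (M : 'M[C]_n) : psdf (fun p q : 'I_1 * 'I_n => M p.2 q.2) ->
  psdf (fun i j => M i j).
Proof.
move=> [h1 h2]; split => [i j|v]; first exact: (h1 (ord0, i) (ord0, j)).
have := h2 (fun p => v p.2); rewrite sum1n; under eq_bigr do rewrite sum1n.
by [].
Qed.

Lemma state_psd w : psdf (fun i j => gqfa_state Q w i j).
Proof.
elim/last_ind: w => [|w s IH].
  by have [h _] := q_rho0_density Q; exact: h.
rewrite /gqfa_state foldl_rcons -/(gqfa_state Q w).
case: (q_E_cptp Q s) => _ hcp _.
apply: (psd_lower (q_E Q s (gqfa_state Q w))).
have := hcp 1%N (fun _ _ => gqfa_state Q w) (psd_lift _ IH).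
by [].
Qed.

Lemma fQ_ge0 w : 0 <= f_Q Q w.
Proof.
have [hPP hadj] := q_Pacc_proj Q.
have [_ hr] := state_psd w.
have hP i j : (q_Pacc Q j i)^* = q_Pacc Q i j.
  by have := congr1 (fun M : 'M[R[i]]_n => M i j) hadj; rewrite /= mxE.
rewrite /f_Q -{1}hPP -mulmxA mxtrace_mulC /mxtrace.
apply: sumr_ge0 => l _; rewrite mxE.
have := hr (fun m => q_Pacc Q m l).
set rho := gqfa_state Q w.
suff -> : \sum_m (q_Pacc Q *m rho) l m * q_Pacc Q m l =
   \sum_k \sum_m (q_Pacc Q k l)^* * rho k m * q_Pacc Q m l by [].
rewrite exchange_big /=; apply: eq_bigr => m _.
rewrite mxE mulr_suml; apply: eq_bigr => k _; by rewrite hP.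
Qed.

Lemma fQ_Im w : complex.Im (f_Q Q w) = 0.
Proof. exact: ger0_Im (fQ_ge0 w). Qed.

Definition Ap s (x y : option TT) : R := match x, y with
  | None, None => 1 | Some p, Some q => Amat s p q | _, _ => 0 end.
Definition ap (x : option TT) : R :=
  match x with None => 1 | Some p => coord (q_rho0 Q) p end.
Definition bp (lam : R) (x : option TT) : R :=
  match x with None => - lam | Some p => bco p end.

Lemma fold_coord w x : foldl (@stepT R Sigma (option TT) Ap) ap w x =
  match x with None => 1 | Some p => coord (gqfa_state Q w) p end.
Proof.
elim/last_ind: w x => [|w s IH] x; first by case: x.
rewrite !foldl_rcons /stepT big_opt.
under eq_bigr => p _ do rewrite IH.
rewrite IH /gqfa_state foldl_rcons -/(gqfa_state Q w).
case: x => [q|] /=.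
  by rewrite mul1r add0r coordE.
by rewrite mulr1 big1 ?addr0 // => p _; rewrite mulr0.
Qed.

Lemma gval_eq lam w :
  @gval R Sigma (option TT) Ap ap (bp lam) w = complex.Re (f_Q Q w) - lam.
Proof.
rewrite /gval big_opt fold_coord Re_fQ.
under eq_bigr => p _ do rewrite fold_coord.
by rewrite /= mul1r addrC.
Qed.

End Qu.

Theorem corollary3p3 (R : realType) (Sigma : finType) (n : nat)
  (Q : gqfa R Sigma n) (lam : R) :
  (1 <= n)%N -> 0 <= lam < 1 ->
  exists (m : nat) (P : pfa R Sigma m) (mu : R),
    [/\ (m <= 2 * n ^ 2 + 6)%N, 0 <= mu < 1 &
        forall w : seq Sigma, lang_P P mu w <-> lang_Q Q lam w].
Proof.
move=> _ _.
exists (m2 (option (TT n))).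
exists (@thePFA R Sigma (option (TT n)) (@Ap R Sigma n Q) (@ap R Sigma n Q) (@bp R Sigma n Q lam)).
exists 2^-1; split.
- rewrite /m2 !card_option !card_prod !card_ord card_bool. lia.
- apply/andP; split; lra.
move=> w; rewrite /lang_P /lang_Q thePFA_f fval_eq gval_eq ltcE /= fQ_Im eqxx /=.
set k := _ / _ / _.
have hk : 0 < k.
  rewrite /k; apply: divr_gt0; last by rewrite mulr_gt0 // sumabs_ge0.
  apply: divr_gt0; last by rewrite mulr_gt0 ?NN_gt0 // sumabs_ge0.
  by apply: exprn_gt0; rewrite invr_gt0 mulr_gt0 ?NN_gt0 ?cB_gt0.
rewrite addrC ltrDl pmulr_rgt0 // subr_gt0.
by [].
Qed.
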